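(* Suppose $\vec S_n(t),\bar{\vec S}_n(t)\in\mathbb{C}^m$ and $v_n(t)$ ($n\in\mathbb{Z}$) satisfy the discrete multicomponent Yajima--Oikawa system \begin{align*} \mathrm{i}\,\vec S_{n,t}&=v_n(\vec S_{n+1}+\vec S_{n-1})-c\,\vec S_n,\\ \mathrm{i}\,\bar{\vec S}_{n,t}&=-v_n(\bar{\vec S}_{n+1}+\bar{\vec S}_{n-1})+c\,\bar{\vec S}_n,\\ v_{n,t}&=\tfrac12 v_n\,\Delta_n^+\big(\langle\vec S_n,\bar{\vec S}_{n-1}\rangle+\langle\vec S_{n-1},\bar{\vec S}_n\rangle\big), \end{align*} with $c$ a constant (and with decay at $n\to-\infty$ sufficient for the sums below to converge). Then the overdetermined linear equations for a scalar $\psi_n$, \[ v_n(\psi_{n+1}+\psi_{n-1})=\lambda\psi_n-\frac{\mathrm{i}}{2}\sum_{j=-\infty}^{n-1}\Big[\langle\vec S_n,\bar{\vec S}_j\rangle+(-1)^{n-j-1}\langle\vec S_j,\bar{\vec S}_n\rangle\Big](\psi_{j+1}+\psi_{j-1}), \] and \[ \mathrm{i}\,\psi_{n,t}=v_n(\psi_{n+1}+\psi_{n-1})-c\,\psi_n, \] are compatible, where $\lambda$ is a constant spectral parameter. (The converse implication does not hold.)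
   Context: $\langle\vec a,\vec b\rangle=\sum_i a^{(i)}b^{(i)}$ is the bilinear scalar product; $\Delta_n^+f_n:=f_{n+1}-f_n$; $\bar{\vec S}_n$ is an independent vector variable. ''Compatible'' means that differentiating the first (spatial) equation in $t$ and using the second equation and the first equation to eliminate time derivatives of $\psi$ and $\lambda$ yields an identity for arbitrary $\psi$. *)

(* Defs.v *)
From Stdlib Require Import Reals ZArith.
Open Scope R_scope.

Record Cplx := mkC { Cre : R; Cim : R }.
Definition C0 : Cplx := mkC 0 0.
Definition C1 : Cplx := mkC 1 0.
Definition Ci : Cplx := mkC 0 1.
Definition RC (r : R) : Cplx := mkC r 0.
Definition Cadd (z w : Cplx) : Cplx := mkC (Cre z + Cre w) (Cim z + Cim w).
Definition Copp (z : Cplx) : Cplx := mkC (- Cre z) (- Cim z).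
Definition Csub (z w : Cplx) : Cplx := Cadd z (Copp w).
Definition Cmul (z w : Cplx) : Cplx :=
  mkC (Cre z * Cre w - Cim z * Cim w) (Cre z * Cim w + Cim z * Cre w).
(* an (equivalent) norm |Re z| + |Im z|, used only for decay conditions *)
Definition Cabs1 (z : Cplx) : R := Rabs (Cre z) + Rabs (Cim z).

Fixpoint Csum_nat (f : nat -> Cplx) (N : nat) : Cplx :=
  match N with O => C0 | S k => Cadd (Csum_nat f k) (f k) end.
Fixpoint Rsum_nat (f : nat -> R) (N : nat) : R :=
  match N with O => 0 | S k => Rsum_nat f k + f k end.

(** vectors of C^m: functions nat -> C, only the components i < m matter *)
Definition cvec := nat -> Cplx.
Definition bdot (m : nat) (a b : cvec) : Cplx :=
  Csum_nat (fun i => Cmul (a i) (b i)) m.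

Definition sgnZ (k : Z) : Cplx := if Z.even k then C1 else Copp C1.

(** lsum f n l : the series sum_{j=-oo}^{n-1} f j converges to l
    (limit of the partial sums sum_{j=n-N}^{n-1} f j as N -> oo) *)
Definition lsum (f : Z -> Cplx) (n : Z) (l : Cplx) : Prop :=
  let p := fun N => Csum_nat (fun k => f (n - 1 - Z.of_nat k)%Z) N in
  Un_cv (fun N => Cre (p N)) (Cre l) /\ Un_cv (fun N => Cim (p N)) (Cim l).

Definition left_summable (g : Z -> R) : Prop :=
  exists B : R, forall N : nat,
    Rsum_nat (fun k => Rabs (g (- Z.of_nat k)%Z)) N <= B.

Definition kerYO (m : nat) (S Sb : Z -> cvec) (n j : Z) : Cplx :=
  Cadd (bdot m (S n) (Sb j)) (Cmul (sgnZ (n - j - 1)%Z) (bdot m (S j) (Sb n))).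

(** its formal time derivative (product rule), given the derivatives St, Sbt *)
Definition kerYO_dot (m : nat) (S Sb St Sbt : Z -> cvec) (n j : Z) : Cplx :=
  Cadd (Cadd (bdot m (St n) (Sb j)) (bdot m (S n) (Sbt j)))
       (Cmul (sgnZ (n - j - 1)%Z)
             (Cadd (bdot m (St j) (Sb n)) (bdot m (S j) (Sbt n)))).

(** P_n = <S_n, Sb_{n-1}> + <S_{n-1}, Sb_n>, so that v_t = 1/2 v Delta^+ P *)
Definition PYO (m : nat) (S Sb : Z -> cvec) (n : Z) : Cplx :=
  Cadd (bdot m (S n) (Sb (n - 1)%Z)) (bdot m (S (n - 1)%Z) (Sb n)).

Definition wYO (m : nat) (S Sb : Z -> cvec) (j : Z) : R :=
  Rsum_nat (fun i => Cabs1 (S j i) + Cabs1 (Sb j i)) m.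

Definition decayYO (m : nat) (S Sb : Z -> cvec) (v psi : Z -> Cplx) (j : Z) : R :=
  wYO m S Sb j
  * (1 + Cabs1 (v (j - 1)%Z) + Cabs1 (v j) + Cabs1 (v (j + 1)%Z))
  * (Cabs1 (psi (j - 2)%Z) + Cabs1 (psi (j - 1)%Z) + Cabs1 (psi j)
     + Cabs1 (psi (j + 1)%Z) + Cabs1 (psi (j + 2)%Z)).

(* Main.v *)
Require Import Defs.
From Stdlib Require Import Reals ZArith.
Open Scope R_scope.
From Stdlib Require Import Lra Lia Ring.
Import Defs.

Lemma Cext z w : Cre z = Cre w -> Cim z = Cim w -> z = w.
Proof. destruct z, w; simpl; intros; subst; reflexivity. Qed.
Lemma Cring : ring_theory C0 C1 Cadd Cmul Csub Copp (@eq Cplx).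
Proof.
constructor; intros; apply Cext; unfold Cadd, Cmul, Csub, Copp, C0, C1; simpl; ring.
Qed.
Add Ring Cring : Cring.
Lemma Ci2 : Cmul Ci Ci = Copp C1.
Proof. apply Cext; unfold Cmul, Ci, Copp, C1; simpl; ring. Qed.
Lemma Rh2 : Cmul (RC (/2)) (RC 2) = C1.
Proof. apply Cext; unfold Cmul, RC, C1; simpl; field. Qed.
Lemma solve_i z y : Cmul Ci z = y -> z = Cmul (Copp Ci) y.
Proof. intros <-. apply Cext; unfold Cmul, Ci, Copp; simpl; ring. Qed.
Lemma solve_half l a b : a = Csub b (Cmul (Cmul Ci (RC (/2))) l) ->
  l = Cmul (Cmul (Copp Ci) (RC 2)) (Csub b a).
Proof. intros ->. apply Cext; unfold Csub, Cadd, Cmul, Ci, Copp, RC; simpl; field. Qed.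

Definition Ccv (u : nat -> Cplx) (l : Cplx) : Prop :=
  Un_cv (fun N => Cre (u N)) (Cre l) /\ Un_cv (fun N => Cim (u N)) (Cim l).

Lemma Un_cv_ext u w l : Un_cv u l -> (forall N, u N = w N) -> Un_cv w l.
Proof. unfold Un_cv; intros H E eps He. destruct (H eps He) as [N HN].
  exists N; intros k Hk; rewrite <- E; auto. Qed.
Lemma Un_cv_const a : Un_cv (fun _ => a) a.
Proof. unfold Un_cv, R_dist; intros eps He; exists 0%nat; intros.
  unfold Rminus; rewrite Rplus_opp_r, Rabs_R0; auto. Qed.
Lemma Ccv_ext u w l : Ccv u l -> (forall N, u N = w N) -> Ccv w l.
Proof. intros [H1 H2] E; split; eapply Un_cv_ext; eauto; intros; simpl; rewrite E; auto. Qed.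
Lemma Ccv_eq u a b : Ccv u a -> a = b -> Ccv u b.
Proof. intros H <-; exact H. Qed.
Lemma Ccv_const a : Ccv (fun _ => a) a.
Proof. split; apply Un_cv_const. Qed.
Lemma Ccv_add u w a b : Ccv u a -> Ccv w b -> Ccv (fun N => Cadd (u N) (w N)) (Cadd a b).
Proof. intros [H1 H2] [H3 H4]; split; simpl.
  - exact (CV_plus _ _ _ _ H1 H3).
  - exact (CV_plus _ _ _ _ H2 H4). Qed.
Lemma Ccv_mul_l z u a : Ccv u a -> Ccv (fun N => Cmul z (u N)) (Cmul z a).
Proof. intros [H1 H2]; split; simpl.
  - apply CV_minus; apply CV_mult; auto; apply Un_cv_const.
  - apply CV_plus; apply CV_mult; auto; apply Un_cv_const. Qed.
Lemma Ccv_opp u a : Ccv u a -> Ccv (fun N => Copp (u N)) (Copp a).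
Proof. intros H. eapply Ccv_eq. eapply Ccv_ext. apply (Ccv_mul_l (Copp C1) _ _ H).
  intros; simpl; ring. ring. Qed.
Lemma Ccv_sub u w a b : Ccv u a -> Ccv w b -> Ccv (fun N => Csub (u N) (w N)) (Csub a b).
Proof. intros H1 H2; apply Ccv_add; auto; apply Ccv_opp; auto. Qed.
Lemma Ccv_shift u a : Ccv u a -> Ccv (fun N => u (S N)) a.
Proof. intros [H1 H2]; split.
  - eapply Un_cv_ext. apply (CV_shift' _ 1 _ H1). intros; cbv beta; rewrite Nat.add_1_r; auto.
  - eapply Un_cv_ext. apply (CV_shift' _ 1 _ H2). intros; cbv beta; rewrite Nat.add_1_r; auto. Qed.
Lemma Ccv_unshift u a : Ccv (fun N => u (S N)) a -> Ccv u a.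
Proof. intros [H1 H2]; split.
  - apply (CV_shift _ 1). eapply Un_cv_ext. apply H1. intros; cbv beta; rewrite Nat.add_1_r; auto.
  - apply (CV_shift _ 1). eapply Un_cv_ext. apply H2. intros; cbv beta; rewrite Nat.add_1_r; auto. Qed.
Lemma Ccv_zero u b : (forall N, Cabs1 (u N) <= b N) -> Un_cv b 0 -> Ccv u C0.
Proof. intros Hb H; split; unfold Un_cv, R_dist in *; intros eps He;
  destruct (H eps He) as [N HN]; exists N; intros k Hk; specialize (HN k Hk);
  specialize (Hb k); unfold Cabs1 in Hb; simpl; rewrite Rminus_0_r in *;
  pose proof (Rabs_pos (Cre (u k))); pose proof (Rabs_pos (Cim (u k)));
  pose proof (Rle_abs (b k)); lra. Qed.

Lemma Csum_shift f N : Csum_nat f (S N) = Cadd (f O) (Csum_nat (fun k => f (S k)) N).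
Proof. induction N. simpl; ring.
  change (Csum_nat f (S (S N))) with (Cadd (Csum_nat f (S N)) (f (S N))).
  rewrite IHN; simpl; ring. Qed.
Lemma Csum_ext f g N : (forall k, (k < N)%nat -> f k = g k) -> Csum_nat f N = Csum_nat g N.
Proof. induction N; intros H; simpl; auto. rewrite IHN, H; auto. Qed.

Lemma bdot_S m a b : bdot (S m) a b = Cadd (bdot m a b) (Cmul (a m) (b m)).
Proof. reflexivity. Qed.
Lemma bdot_comm m a b : bdot m a b = bdot m b a.
Proof. induction m; auto. rewrite !bdot_S, IHm; ring. Qed.
Lemma bdot_lin_l m z w e a b d f X :
  (forall k, (k < m)%nat -> Cmul z (a k) = Cadd (Cmul w (Cadd (b k) (d k))) (Cmul e (f k))) ->
  Cmul z (bdot m a X) = Cadd (Cmul w (Cadd (bdot m b X) (bdot m d X))) (Cmul e (bdot m f X)).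
Proof. induction m; intros H. unfold bdot; simpl; ring.
  rewrite !bdot_S.
  transitivity (Cadd (Cmul z (bdot m a X)) (Cmul (Cmul z (a m)) (X m))). ring.
  rewrite IHm, H; auto. ring. Qed.

Lemma sgnZ_succ k : sgnZ (k + 1) = Copp (sgnZ k).
Proof. unfold sgnZ. rewrite Z.even_add. destruct (Z.even k); simpl;
  apply Cext; simpl; ring. Qed.
Lemma sgnZ_pred k : sgnZ (k - 1) = Copp (sgnZ k).
Proof. replace k with ((k - 1) + 1)%Z at 2 by ring. rewrite sgnZ_succ.
  apply Cext; simpl; ring. Qed.

Definition phi (psi : Z -> Cplx) (j : Z) := Cadd (psi (j + 1)%Z) (psi (j - 1)%Z).
Definition gg (v psi : Z -> Cplx) (j : Z) := Cmul (v j) (phi psi j).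
Definition AA m (S Sb : Z -> cvec) (a b : Z) := bdot m (S a) (Sb b).
Definition TT m S Sb v psi (n j : Z) :=
  Csub (Cmul (AA m S Sb n j) (gg v psi (j + 1)%Z)) (Cmul (AA m S Sb n (j + 1)%Z) (gg v psi j)).
Definition UU m S Sb v psi (n j : Z) :=
  Csub (Cmul (Cmul (sgnZ (n - j - 1)%Z) (AA m S Sb j n)) (gg v psi (j + 1)%Z))
       (Cmul (Cmul (sgnZ (n - (j + 1) - 1)%Z) (AA m S Sb (j + 1)%Z n)) (gg v psi j)).
Definition fa m S Sb psi (a j : Z) := Cmul (kerYO m S Sb a j) (phi psi j).
Definition hh m S Sb St Sbt psi psit (n j : Z) :=
  Cadd (Cmul (kerYO_dot m S Sb St Sbt n j) (phi psi j)) (Cmul (kerYO m S Sb n j) (phi psit j)).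

Lemma iSt m c (S St : Z -> cvec) v
  (HS : forall (n : Z) (i : nat), (i < m)%nat ->
     Cmul Ci (St n i) =
     Csub (Cmul (v n) (Cadd (S (n + 1)%Z i) (S (n - 1)%Z i))) (Cmul c (S n i))) a X :
  Cmul Ci (bdot m (St a) X) = Cadd (Cmul (v a) (Cadd (bdot m (S (a+1)%Z) X) (bdot m (S (a-1)%Z) X)))
     (Cmul (Copp c) (bdot m (S a) X)).
Proof. apply bdot_lin_l. intros k hk. rewrite HS by exact hk. unfold Csub. ring. Qed.

Lemma iSbt m c (Sb Sbt : Z -> cvec) v
  (HSb : forall (n : Z) (i : nat), (i < m)%nat ->
     Cmul Ci (Sbt n i) =
     Cadd (Copp (Cmul (v n) (Cadd (Sb (n + 1)%Z i) (Sb (n - 1)%Z i))))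
          (Cmul c (Sb n i))) b X :
  Cmul Ci (bdot m X (Sbt b)) = Cadd (Cmul (Copp (v b)) (Cadd (bdot m X (Sb (b+1)%Z)) (bdot m X (Sb (b-1)%Z))))
     (Cmul c (bdot m X (Sb b))).
Proof. rewrite !(bdot_comm m X). apply bdot_lin_l. intros k hk. rewrite HSb by exact hk. ring. Qed.

Lemma pointwise m c (S Sb St Sbt : Z -> cvec) v psi psit
  (HS : forall (n : Z) (i : nat), (i < m)%nat ->
     Cmul Ci (St n i) =
     Csub (Cmul (v n) (Cadd (S (n + 1)%Z i) (S (n - 1)%Z i))) (Cmul c (S n i)))
  (HSb : forall (n : Z) (i : nat), (i < m)%nat ->
     Cmul Ci (Sbt n i) =
     Cadd (Copp (Cmul (v n) (Cadd (Sb (n + 1)%Z i) (Sb (n - 1)%Z i))))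
          (Cmul c (Sb n i)))
  (Hpsit : forall n : Z,
     Cmul Ci (psit n) =
     Csub (Cmul (v n) (Cadd (psi (n + 1)%Z) (psi (n - 1)%Z))) (Cmul c (psi n))) n j :
  Cmul Ci (hh m S Sb St Sbt psi psit n j) =
  Cadd (Cadd (Cmul (v n) (Cadd (fa m S Sb psi (n+1)%Z j) (fa m S Sb psi (n-1)%Z j)))
             (Copp (Cmul c (fa m S Sb psi n j))))
       (Cadd (Csub (TT m S Sb v psi n j) (TT m S Sb v psi n (j-1)%Z))
             (Csub (UU m S Sb v psi n j) (UU m S Sb v psi n (j-1)%Z))).
Proof.
  pose proof (iSt m c S St v HS n (Sb j)) as e1.
  pose proof (iSbt m c Sb Sbt v HSb j (S n)) as e2.
  pose proof (iSt m c S St v HS j (Sb n)) as e3.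
  pose proof (iSbt m c Sb Sbt v HSb n (S j)) as e4.
  pose proof (Hpsit (j + 1)%Z) as e5.
  pose proof (Hpsit (j - 1)%Z) as e6.
  unfold hh, fa, TT, UU, gg, phi, AA, kerYO_dot, kerYO.
  replace (j - 1 + 1)%Z with j in * by ring.
  replace (n + 1 - j - 1)%Z with ((n - j - 1) + 1)%Z by ring.
  replace (n - 1 - j - 1)%Z with ((n - j - 1) - 1)%Z by ring.
  replace (n - (j + 1) - 1)%Z with ((n - j - 1) - 1)%Z by ring.
  replace (n - (j - 1) - 1)%Z with ((n - j - 1) + 1)%Z by ring.
  rewrite (sgnZ_succ (n - j - 1)), (sgnZ_pred (n - j - 1)).
  rewrite (solve_i _ _ e5), (solve_i _ _ e6), (solve_i _ _ e1), (solve_i _ _ e2), (solve_i _ _ e3), (solve_i _ _ e4). ring [Ci2].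
Qed.

Lemma summed m c (S Sb St Sbt : Z -> cvec) v psi psit
  (HS : forall (n : Z) (i : nat), (i < m)%nat ->
     Cmul Ci (St n i) =
     Csub (Cmul (v n) (Cadd (S (n + 1)%Z i) (S (n - 1)%Z i))) (Cmul c (S n i)))
  (HSb : forall (n : Z) (i : nat), (i < m)%nat ->
     Cmul Ci (Sbt n i) =
     Cadd (Copp (Cmul (v n) (Cadd (Sb (n + 1)%Z i) (Sb (n - 1)%Z i))))
          (Cmul c (Sb n i)))
  (Hpsit : forall n : Z,
     Cmul Ci (psit n) =
     Csub (Cmul (v n) (Cadd (psi (n + 1)%Z) (psi (n - 1)%Z))) (Cmul c (psi n))) n N :
  Cmul Ci (Csum_nat (fun k => hh m S Sb St Sbt psi psit n (n - 1 - Z.of_nat k)%Z) N) =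
  Cadd (Cadd (Cmul (v n) (Cadd (Csum_nat (fun k => fa m S Sb psi (n+1)%Z (n - 1 - Z.of_nat k)%Z) N)
                               (Csum_nat (fun k => fa m S Sb psi (n-1)%Z (n - 1 - Z.of_nat k)%Z) N)))
             (Copp (Cmul c (Csum_nat (fun k => fa m S Sb psi n (n - 1 - Z.of_nat k)%Z) N))))
       (Cadd (Csub (TT m S Sb v psi n (n-1)%Z) (TT m S Sb v psi n (n - 1 - Z.of_nat N)%Z))
             (Csub (UU m S Sb v psi n (n-1)%Z) (UU m S Sb v psi n (n - 1 - Z.of_nat N)%Z))).
Proof.
  induction N.
  - simpl. rewrite Z.sub_0_r. ring.
  - simpl Csum_nat.
    transitivity (Cadd (Cmul Ci (Csum_nat (fun k => hh m S Sb St Sbt psi psit n (n - 1 - Z.of_nat k)%Z) N))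
                       (Cmul Ci (hh m S Sb St Sbt psi psit n (n - 1 - Z.of_nat N)%Z))). ring.
    rewrite IHN, (pointwise m c S Sb St Sbt v psi psit HS HSb Hpsit).
    replace (n - 1 - Z.of_nat N - 1)%Z with (n - 1 - Z.of_nat (Datatypes.S N))%Z by lia.
    ring.
Qed.

Lemma Cabs1_pos z : 0 <= Cabs1 z.
Proof. unfold Cabs1; pose proof (Rabs_pos (Cre z)); pose proof (Rabs_pos (Cim z)); lra. Qed.
Lemma Cabs1_add z w : Cabs1 (Cadd z w) <= Cabs1 z + Cabs1 w.
Proof. unfold Cabs1, Cadd; simpl.
  pose proof (Rabs_triang (Cre z) (Cre w)); pose proof (Rabs_triang (Cim z) (Cim w)); lra. Qed.
Lemma Cabs1_opp z : Cabs1 (Copp z) = Cabs1 z.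
Proof. unfold Cabs1, Copp; simpl; rewrite !Rabs_Ropp; auto. Qed.
Lemma Cabs1_sub z w : Cabs1 (Csub z w) <= Cabs1 z + Cabs1 w.
Proof. unfold Csub; rewrite <- (Cabs1_opp w); apply Cabs1_add. Qed.
Lemma Cabs1_mul z w : Cabs1 (Cmul z w) <= Cabs1 z * Cabs1 w.
Proof. destruct z as [a b], w as [c d]; unfold Cabs1, Cmul; simpl.
  assert (h1 : Rabs (a*c - b*d) <= Rabs a * Rabs c + Rabs b * Rabs d).
  { unfold Rminus; eapply Rle_trans; [apply Rabs_triang|]; rewrite Rabs_Ropp, !Rabs_mult; lra. }
  assert (h2 : Rabs (a*d + b*c) <= Rabs a * Rabs d + Rabs b * Rabs c).
  { eapply Rle_trans; [apply Rabs_triang|]; rewrite !Rabs_mult; lra. }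
  nra. Qed.
Lemma Cabs1_sgn k : Cabs1 (sgnZ k) = 1.
Proof. unfold sgnZ; destruct (Z.even k); unfold Cabs1, C1, Copp; simpl;
  rewrite ?Rabs_Ropp, Rabs_R1, Rabs_R0; ring. Qed.

Lemma Rsum_pos f N : (forall i, 0 <= f i) -> 0 <= Rsum_nat f N.
Proof. intros H; induction N; simpl; [lra|]. specialize (H N); lra. Qed.
Lemma Rsum_le f g N : (forall i, f i <= g i) -> Rsum_nat f N <= Rsum_nat g N.
Proof. intros H; induction N; simpl; [lra|]. specialize (H N); lra. Qed.

Lemma bdot_bound m a b :
  Cabs1 (bdot m a b) <= Rsum_nat (fun i => Cabs1 (a i)) m * Rsum_nat (fun i => Cabs1 (b i)) m.
Proof. induction m.
  - unfold bdot, Cabs1; simpl; rewrite Rabs_R0; lra.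
  - rewrite bdot_S; simpl.
    pose proof (Cabs1_add (bdot m a b) (Cmul (a m) (b m))).
    pose proof (Cabs1_mul (a m) (b m)).
    pose proof (Rsum_pos (fun i => Cabs1 (a i)) m (fun i => Cabs1_pos _)).
    pose proof (Rsum_pos (fun i => Cabs1 (b i)) m (fun i => Cabs1_pos _)).
    pose proof (Cabs1_pos (a m)); pose proof (Cabs1_pos (b m)).
    nra. Qed.

Lemma wYO_pos m S Sb j : 0 <= wYO m S Sb j.
Proof. unfold wYO; apply Rsum_pos; intros; pose proof (Cabs1_pos (S j i)); pose proof (Cabs1_pos (Sb j i)); lra. Qed.

Lemma AA_bound m (S Sb : Z -> cvec) a b : Cabs1 (bdot m (S a) (Sb b)) <= wYO m S Sb a * wYO m S Sb b.
Proof. eapply Rle_trans; [apply bdot_bound|]. unfold wYO.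
  apply Rmult_le_compat.
  - apply Rsum_pos; intros; apply Cabs1_pos.
  - apply Rsum_pos; intros; apply Cabs1_pos.
  - apply Rsum_le; intros; pose proof (Cabs1_pos (Sb a i)); lra.
  - apply Rsum_le; intros; pose proof (Cabs1_pos (S b i)); lra. Qed.

Lemma summable_to0 g : left_summable g -> forall a : Z,
  Un_cv (fun N => g (a - Z.of_nat N)%Z) 0.
Proof.
  intros [B HB] a.
  set (s := fun N => Rsum_nat (fun k => Rabs (g (- Z.of_nat k)%Z)) N).
  assert (Hg : Un_growing s).
  { intros N; unfold s; simpl; pose proof (Rabs_pos (g (- Z.of_nat N)%Z)); lra. }
  assert (Hb : has_ub s) by (exists B; intros x [N ->]; apply HB).
  destruct (growing_cv s Hg Hb) as [l Hl].
  assert (Ht : Un_cv (fun k => Rabs (g (- Z.of_nat k)%Z)) 0).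
  { replace 0 with (l - l) by ring.
    apply (Un_cv_ext _ _ _ (CV_minus _ _ _ _ (CV_shift' _ 1%nat _ Hl) Hl)).
    intros N; cbv beta; rewrite Nat.add_1_r; unfold s; simpl; ring. }
  intros eps He. destruct (Ht eps He) as [K HK].
  exists (K + Z.to_nat a)%nat. intros N HN.
  specialize (HK (Z.to_nat (Z.of_nat N - a))).
  replace (a - Z.of_nat N)%Z with (- Z.of_nat (Z.to_nat (Z.of_nat N - a)))%Z by lia.
  unfold R_dist in *. rewrite Rminus_0_r in *.

  rewrite Rabs_Rabsolu in HK. apply HK. lia.
Qed.

Lemma gen_ineq w V W x X : 0 <= w -> 0 <= V -> V <= W -> 0 <= x -> x <= X -> w * (V * x) <= w * W * X.
Proof. intros. rewrite Rmult_assoc. apply Rmult_le_compat_l; auto. apply Rmult_le_compat; auto. Qed.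

Lemma G1 x y p q : Cabs1 (Cmul x (Cmul y (Cadd p q))) <= Cabs1 x * (Cabs1 y * (Cabs1 p + Cabs1 q)).
Proof.
  eapply Rle_trans; [apply Cabs1_mul|]. apply Rmult_le_compat_l; [apply Cabs1_pos|].
  eapply Rle_trans; [apply Cabs1_mul|]. apply Rmult_le_compat_l; [apply Cabs1_pos|].
  apply Cabs1_add. Qed.
Lemma G2 s x y p q : Cabs1 (Cmul (Cmul s x) (Cmul y (Cadd p q))) <= Cabs1 s * Cabs1 x * (Cabs1 y * (Cabs1 p + Cabs1 q)).
Proof.
  eapply Rle_trans; [apply Cabs1_mul|]. apply Rmult_le_compat.
  apply Cabs1_pos. apply Cabs1_pos. apply Cabs1_mul.
  eapply Rle_trans; [apply Cabs1_mul|]. apply Rmult_le_compat_l; [apply Cabs1_pos|].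
  apply Cabs1_add. Qed.

Lemma bd_bound m S Sb v psi n j :
  Cabs1 (Cadd (TT m S Sb v psi n j) (UU m S Sb v psi n j)) <=
  2 * wYO m S Sb n * (decayYO m S Sb v psi j + decayYO m S Sb v psi (j + 1)%Z).
Proof.
  set (wn := wYO m S Sb n).
  assert (Hwn : 0 <= wn) by apply wYO_pos.
  assert (K1 : wYO m S Sb j * (Cabs1 (v (j+1)%Z) * (Cabs1 (psi (j+1+1)%Z) + Cabs1 (psi (j+1-1)%Z)))
               <= decayYO m S Sb v psi j).
  { unfold decayYO. replace (j+1+1)%Z with (j+2)%Z by ring. replace (j+1-1)%Z with j by ring.
    pose proof (Cabs1_pos (v (j-1)%Z)); pose proof (Cabs1_pos (v j)); pose proof (Cabs1_pos (v (j+1)%Z));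
    pose proof (Cabs1_pos (psi (j-2)%Z)); pose proof (Cabs1_pos (psi (j-1)%Z)); pose proof (Cabs1_pos (psi j));
    pose proof (Cabs1_pos (psi (j+1)%Z)); pose proof (Cabs1_pos (psi (j+2)%Z));
    apply gen_ineq; try apply wYO_pos; lra. }
  assert (K2 : wYO m S Sb (j+1)%Z * (Cabs1 (v j) * (Cabs1 (psi (j+1)%Z) + Cabs1 (psi (j-1)%Z)))
               <= decayYO m S Sb v psi (j+1)%Z).
  { unfold decayYO. replace (j+1-1)%Z with j by ring. replace (j+1-2)%Z with (j-1)%Z by ring.
    pose proof (Cabs1_pos (v (j+1+1)%Z)); pose proof (Cabs1_pos (v j)); pose proof (Cabs1_pos (v (j+1)%Z));
    pose proof (Cabs1_pos (psi (j+1+1)%Z)); pose proof (Cabs1_pos (psi (j-1)%Z)); pose proof (Cabs1_pos (psi j));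
    pose proof (Cabs1_pos (psi (j+1)%Z)); pose proof (Cabs1_pos (psi (j+1+2)%Z));
    apply gen_ineq; try apply wYO_pos; lra. }
  unfold TT, UU, gg, phi, AA.
  pose proof (G1 (bdot m (S n) (Sb j)) (v (j+1)%Z) (psi (j+1+1)%Z) (psi (j+1-1)%Z)) as t1.
  pose proof (G1 (bdot m (S n) (Sb (j+1)%Z)) (v j) (psi (j+1)%Z) (psi (j-1)%Z)) as t2.
  pose proof (G2 (sgnZ (n - j - 1)) (bdot m (S j) (Sb n)) (v (j+1)%Z) (psi (j+1+1)%Z) (psi (j+1-1)%Z)) as t3.
  pose proof (G2 (sgnZ (n - (j + 1) - 1)) (bdot m (S (j+1)%Z) (Sb n)) (v j) (psi (j+1)%Z) (psi (j-1)%Z)) as t4.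
  rewrite !Cabs1_sgn, !Rmult_1_l in *.
  pose proof (AA_bound m S Sb n j) as a1.
  pose proof (AA_bound m S Sb n (j+1)%Z) as a2.
  pose proof (AA_bound m S Sb j n) as a3.
  pose proof (AA_bound m S Sb (j+1)%Z n) as a4.
  fold wn in a1, a2, a3, a4.
  set (X1 := Cabs1 (v (j+1)%Z) * (Cabs1 (psi (j+1+1)%Z) + Cabs1 (psi (j+1-1)%Z))) in *.
  set (X2 := Cabs1 (v j) * (Cabs1 (psi (j+1)%Z) + Cabs1 (psi (j-1)%Z))) in *.
  assert (HX1 : 0 <= X1) by (unfold X1; pose proof (Cabs1_pos (v (j+1)%Z)); pose proof (Cabs1_pos (psi (j+1+1)%Z)); pose proof (Cabs1_pos (psi (j+1-1)%Z)); nra).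
  assert (HX2 : 0 <= X2) by (unfold X2; pose proof (Cabs1_pos (v j)); pose proof (Cabs1_pos (psi (j+1)%Z)); pose proof (Cabs1_pos (psi (j-1)%Z)); nra).
  set (wj := wYO m S Sb j) in *. set (wj1 := wYO m S Sb (j+1)%Z) in *.
  assert (e1 : Cabs1 (bdot m (S n) (Sb j)) * X1 <= wn * decayYO m S Sb v psi j).
  { eapply Rle_trans. apply Rmult_le_compat_r; [exact HX1| exact a1]. rewrite Rmult_assoc. apply Rmult_le_compat_l; auto. }
  assert (e2 : Cabs1 (bdot m (S n) (Sb (j+1)%Z)) * X2 <= wn * decayYO m S Sb v psi (j+1)%Z).
  { eapply Rle_trans. apply Rmult_le_compat_r; [exact HX2| exact a2]. rewrite Rmult_assoc. apply Rmult_le_compat_l; auto. }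
  assert (e3 : Cabs1 (bdot m (S j) (Sb n)) * X1 <= wn * decayYO m S Sb v psi j).
  { eapply Rle_trans. apply Rmult_le_compat_r; [exact HX1| exact a3]. rewrite (Rmult_comm wj wn), Rmult_assoc. apply Rmult_le_compat_l; auto. }
  assert (e4 : Cabs1 (bdot m (S (j+1)%Z) (Sb n)) * X2 <= wn * decayYO m S Sb v psi (j+1)%Z).
  { eapply Rle_trans. apply Rmult_le_compat_r; [exact HX2| exact a4]. rewrite (Rmult_comm wj1 wn), Rmult_assoc. apply Rmult_le_compat_l; auto. }
  eapply Rle_trans. apply Cabs1_add.
  pose proof (Cabs1_sub (Cmul (bdot m (S n) (Sb j)) (Cmul (v (j + 1)%Z) (Cadd (psi (j + 1 + 1)%Z) (psi (j + 1 - 1)%Z))))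
       (Cmul (bdot m (S n) (Sb (j + 1)%Z)) (Cmul (v j) (Cadd (psi (j + 1)%Z) (psi (j - 1)%Z))))).
  pose proof (Cabs1_sub (Cmul (Cmul (sgnZ (n - j - 1)) (bdot m (S j) (Sb n))) (Cmul (v (j + 1)%Z) (Cadd (psi (j + 1 + 1)%Z) (psi (j + 1 - 1)%Z))))
       (Cmul (Cmul (sgnZ (n - (j + 1) - 1)) (bdot m (S (j + 1)%Z) (Sb n))) (Cmul (v j) (Cadd (psi (j + 1)%Z) (psi (j - 1)%Z))))).
  lra.
Qed.

Lemma iinv z : Cmul (Copp Ci) (Cmul Ci z) = z.
Proof. apply Cext; unfold Cmul, Ci, Copp; simpl; ring. Qed.

Theorem proposition2p3
  (m : nat) (c lam : Cplx)
  (S Sb St Sbt : Z -> cvec) (v vt psi psit : Z -> Cplx)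
  (HS : forall (n : Z) (i : nat), (i < m)%nat ->
     Cmul Ci (St n i) =
     Csub (Cmul (v n) (Cadd (S (n + 1)%Z i) (S (n - 1)%Z i))) (Cmul c (S n i)))
  (HSb : forall (n : Z) (i : nat), (i < m)%nat ->
     Cmul Ci (Sbt n i) =
     Cadd (Copp (Cmul (v n) (Cadd (Sb (n + 1)%Z i) (Sb (n - 1)%Z i))))
          (Cmul c (Sb n i)))
  (Hv : forall n : Z,
     vt n = Cmul (RC (/ 2))
              (Cmul (v n) (Csub (PYO m S Sb (n + 1)%Z) (PYO m S Sb n))))
  (Hdec1 : left_summable (wYO m S Sb))
  (Hdec2 : left_summable (decayYO m S Sb v psi))
  (Hpsit : forall n : Z,
     Cmul Ci (psit n) =
     Csub (Cmul (v n) (Cadd (psi (n + 1)%Z) (psi (n - 1)%Z))) (Cmul c (psi n)))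
  (Hspat : forall n : Z, exists l : Cplx,
     lsum (fun j => Cmul (kerYO m S Sb n j) (Cadd (psi (j + 1)%Z) (psi (j - 1)%Z))) n l
     /\ Cmul (v n) (Cadd (psi (n + 1)%Z) (psi (n - 1)%Z)) =
        Csub (Cmul lam (psi n)) (Cmul (Cmul Ci (RC (/ 2))) l)) :
  forall n : Z, exists l : Cplx,
    lsum (fun j =>
            Cadd (Cmul (kerYO_dot m S Sb St Sbt n j) (Cadd (psi (j + 1)%Z) (psi (j - 1)%Z)))
                 (Cmul (kerYO m S Sb n j) (Cadd (psit (j + 1)%Z) (psit (j - 1)%Z)))) n l
    /\ Cadd (Cmul (vt n) (Cadd (psi (n + 1)%Z) (psi (n - 1)%Z)))
            (Cmul (v n) (Cadd (psit (n + 1)%Z) (psit (n - 1)%Z))) =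
       Csub (Cmul lam (psit n)) (Cmul (Cmul Ci (RC (/ 2))) l).
Proof.
  intros n.
  destruct (Hspat (n + 1)%Z) as [l1 [Hl1 E1]].
  destruct (Hspat n) as [l0 [Hl0 E0]].
  destruct (Hspat (n - 1)%Z) as [lm [Hlm Em]].
  set (F1 := fa m S Sb psi (n+1)%Z (n + 1 - 1 - Z.of_nat 0)%Z).
  set (X := Cadd (Cadd (Cmul (v n) (Cadd (Csub l1 F1) lm)) (Copp (Cmul c l0)))
                 (Cadd (TT m S Sb v psi n (n-1)%Z) (UU m S Sb v psi n (n-1)%Z))).
  exists (Cmul (Copp Ci) X). split.
  - set (P := fun N => Csum_nat (fun k => hh m S Sb St Sbt psi psit n (n - 1 - Z.of_nat k)%Z) N).
    change (Ccv P (Cmul (Copp Ci) X)).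
    set (p1 := fun M => Csum_nat (fun k => fa m S Sb psi (n+1)%Z (n + 1 - 1 - Z.of_nat k)%Z) M).
    set (p0 := fun M => Csum_nat (fun k => fa m S Sb psi n (n - 1 - Z.of_nat k)%Z) M).
    set (pm := fun M => Csum_nat (fun k => fa m S Sb psi (n-1)%Z (n - 1 - 1 - Z.of_nat k)%Z) M).
    assert (C1' : Ccv p1 l1) by exact Hl1.
    assert (C0' : Ccv p0 l0) by exact Hl0.
    assert (Cm' : Ccv pm lm) by exact Hlm.
    assert (R1 : forall M, Csum_nat (fun k => fa m S Sb psi (n+1)%Z (n - 1 - Z.of_nat k)%Z) M
                           = Csub (p1 (Datatypes.S M)) F1).
    { intros M. unfold p1. rewrite Csum_shift. cbv beta. fold F1.
      rewrite (Csum_ext (fun k => fa m S Sb psi (n+1)%Z (n - 1 - Z.of_nat k)%Z)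
                        (fun k => fa m S Sb psi (n+1)%Z (n + 1 - 1 - Z.of_nat (Datatypes.S k))%Z)).
      ring. intros k _. f_equal. lia. }
    assert (R2 : forall M, Csum_nat (fun k => fa m S Sb psi (n-1)%Z (n - 1 - Z.of_nat k)%Z) (Datatypes.S M)
                           = pm M).
    { intros M. unfold pm. rewrite Csum_shift. cbv beta.
      rewrite (Csum_ext (fun k => fa m S Sb psi (n-1)%Z (n - 1 - Z.of_nat (Datatypes.S k))%Z)
                        (fun k => fa m S Sb psi (n-1)%Z (n - 1 - 1 - Z.of_nat k)%Z)).
      2: { intros k _. f_equal. lia. }
      unfold fa at 1, kerYO.
      replace (n - 1 - Z.of_nat 0)%Z with (n - 1)%Z by (simpl; lia).
      replace (n - 1 - (n - 1) - 1)%Z with (-1)%Z by lia.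
      change (sgnZ (-1)) with (Copp C1). ring. }
    set (bd := fun N => Cadd (TT m S Sb v psi n (n - 1 - Z.of_nat (Datatypes.S N))%Z)
                             (UU m S Sb v psi n (n - 1 - Z.of_nat (Datatypes.S N))%Z)).
    assert (Cbd : Ccv bd C0).
    { apply (Ccv_zero bd (fun N => 2 * wYO m S Sb n *
         (decayYO m S Sb v psi (n - 2 - Z.of_nat N)%Z + decayYO m S Sb v psi (n - 1 - Z.of_nat N)%Z))).
      - intros N. unfold bd. pose proof (bd_bound m S Sb v psi n (n - 1 - Z.of_nat (Datatypes.S N))%Z) as H.
        replace (n - 1 - Z.of_nat (Datatypes.S N) + 1)%Z with (n - 1 - Z.of_nat N)%Z in H by lia.
        replace (n - 1 - Z.of_nat (Datatypes.S N))%Z with (n - 2 - Z.of_nat N)%Z in H at 3 by lia.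
        exact H.
      - replace 0 with (2 * wYO m S Sb n * (0 + 0)) by ring.
        apply (Un_cv_ext (fun N => (fun _ => 2 * wYO m S Sb n) N *
            (decayYO m S Sb v psi (n - 2 - Z.of_nat N)%Z + decayYO m S Sb v psi (n - 1 - Z.of_nat N)%Z))).
        2: { intros; reflexivity. }
        apply CV_mult. apply Un_cv_const. apply CV_plus; apply summable_to0; exact Hdec2. }
    assert (Hc : Ccv (fun N => Cadd (Cadd (Cmul (v n) (Cadd (Csub (p1 (Datatypes.S (Datatypes.S N))) F1) (pm N)))
                                         (Copp (Cmul c (p0 (Datatypes.S N)))))
                                   (Csub (Cadd (TT m S Sb v psi n (n-1)%Z) (UU m S Sb v psi n (n-1)%Z)) (bd N))) X).
    assert (C1s : Ccv (fun N => p1 (Datatypes.S (Datatypes.S N))) l1).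
    { apply (Ccv_shift (fun M => p1 (Datatypes.S M))). apply (Ccv_shift p1). exact C1'. }
    assert (C0s : Ccv (fun N => p0 (Datatypes.S N)) l0) by (apply (Ccv_shift p0); exact C0').
    { eapply Ccv_eq.
      apply Ccv_add. apply Ccv_add. apply Ccv_mul_l. apply Ccv_add. apply Ccv_sub.
      exact C1s. apply Ccv_const. exact Cm'.
      apply Ccv_opp, Ccv_mul_l, C0s.
      apply Ccv_sub. apply Ccv_const. exact Cbd.
      unfold X; ring. }
    apply Ccv_unshift.
    eapply Ccv_ext. apply (Ccv_mul_l (Copp Ci) _ _ Hc).
    intros N. rewrite <- (iinv (P (Datatypes.S N))). f_equal.
    unfold P. rewrite (summed m c S Sb St Sbt v psi psit HS HSb Hpsit n (Datatypes.S N)).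
    rewrite R1, R2. unfold bd. unfold p0. ring.
  - rewrite Hv.
    rewrite (solve_i _ _ (Hpsit (n+1)%Z)), (solve_i _ _ (Hpsit (n-1)%Z)), (solve_i _ _ (Hpsit n)).
    unfold X.
    rewrite (solve_half _ _ _ E1), (solve_half _ _ _ E0), (solve_half _ _ _ Em).
    unfold F1, fa, TT, UU, gg, phi, AA, PYO, kerYO.
    replace (n + 1 - 1 - Z.of_nat 0)%Z with n by (simpl; lia).
    replace (n + 1 - 1)%Z with n by lia.
    replace (n - 1 + 1)%Z with n by lia.
    replace (n + 1 + 1)%Z with (n + 2)%Z by lia.
    replace (n - 1 - 1)%Z with (n - 2)%Z by lia.
    replace (n + 1 - n - 1)%Z with 0%Z by lia.
    replace (n - (n - 1) - 1)%Z with 0%Z by lia.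
    replace (n - n - 1)%Z with (-1)%Z by lia.
    change (sgnZ 0) with C1. change (sgnZ (-1)) with (Copp C1).
    ring [Ci2 Rh2].
Qed.
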